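(* For every positive integer $n$, $$\operatorname{lcm}\left({n\brack 0}_q,{n\brack 1}_q,\ldots,{n\brack n}_q\right)=\frac{\operatorname{lcm}([1]_q,[2]_q,\ldots,[n+1]_q)}{[n+1]_q},$$ where both least common multiples are taken in $\mathbb{Z}[q]$. *)

(* Defs.v *)
From HB Require Import structures.
From mathcomp Require Import all_boot all_order all_algebra.
Set Implicit Arguments. Unset Strict Implicit. Unset Printing Implicit Defensive.
Import Order.TTheory GRing.Theory Num.Theory.
Local Open Scope ring_scope.

Definition qint (k : nat) : {poly int} := \sum_(i < k) 'X^i.

Fixpoint qbinom (n k : nat) {struct n} : {poly int} :=
  match n, k with
  | _, 0 => 1
  | 0, _.+1 => 0
  | n'.+1, k'.+1 => qbinom n' k' + 'X^(k'.+1) * qbinom n' k'.+1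
  end.

(* Divisibility in the ring Z[q] (genuine, not pseudo-division). *)
Definition dvdZq (p m : {poly int}) : Prop := exists r : {poly int}, m = r * p.

(* l is a least common multiple in Z[q] of the polynomials in s
   (determined up to a unit, i.e. up to sign). *)
Definition is_lcmZq (s : seq {poly int}) (l : {poly int}) : Prop :=
  (forall p, p \in s -> dvdZq p l) /\
  (forall m, (forall p, p \in s -> dvdZq p m) -> dvdZq l m).

(* Main.v *)
Require Import Defs.
From HB Require Import structures.
From mathcomp Require Import all_boot all_order all_algebra all_field.
Set Implicit Arguments. Unset Strict Implicit. Unset Printing Implicit Defensive.
Import GRing.Theory.
Local Open Scope ring_scope.

Lemma qintS k : qint k.+1 = qint k + 'X^k.
Proof. by rewrite /qint big_ord_recr. Qed.

Lemma qint0 : qint 0 = 0.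
Proof. by rewrite /qint big_ord0. Qed.

Lemma qintD a b : qint (a + b) = qint a + 'X^a * qint b.
Proof.
elim: b => [|b IH]; first by rewrite addn0 qint0 mulr0 addr0.
by rewrite addnS !qintS IH mulrDr -exprD addrA.
Qed.

Lemma qint_mulX k : ('X - 1) * qint k = 'X^k - 1.
Proof.
elim: k => [|k IH]; first by rewrite qint0 mulr0 expr0 subrr.
rewrite qintS mulrDr IH mulrBl mul1r -exprS.
by rewrite addrC addrA subrK.
Qed.

Definition PE (N : nat) (e : nat -> nat) : {poly int} :=
  \prod_(2 <= d < N) 'Phi_d ^+ e d.

Lemma PE_mul N e1 e2 : PE N e1 * PE N e2 = PE N (fun d => e1 d + e2 d)%N.
Proof. by rewrite /PE -big_split /=; apply: eq_bigr => d _; rewrite exprD. Qed.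

Lemma PE_eq N e1 e2 : (forall d, (2 <= d < N)%N -> e1 d = e2 d) -> PE N e1 = PE N e2.
Proof.
move=> H; rewrite /PE big_nat_cond [RHS]big_nat_cond.
by apply: eq_bigr => d /andP[Hd _]; rewrite H.
Qed.

Lemma PE_monic N e : PE N e \is monic.
Proof. by apply: monic_prod => d _; apply: monic_exp; apply: Cyclotomic_monic. Qed.

Lemma PE_neq0 N e : PE N e != 0.
Proof. exact: monic_neq0 (PE_monic N e). Qed.

Lemma Phi1 : 'Phi_1 = 'X - 1.
Proof.
have := prod_Cyclotomic (ltn0Sn 0).
have -> : divisors 1 = [:: 1%N] by [].
by rewrite big_seq1 expr1.
Qed.

Lemma qint_prod N k : (0 < k < N)%N -> qint k = PE N (fun d => d %| k)%N.
Proof.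
case/andP=> k0 kN.
apply: (@mulfI _ ('X - 1)); first by rewrite -Phi1 monic_neq0 ?Cyclotomic_monic.
rewrite qint_mulX -(prod_Cyclotomic k0).
have pe : perm_eq (divisors k) [seq d <- iota 0 N | (d %| k)%N].
  apply: uniq_perm; first exact: divisors_uniq.
    by rewrite filter_uniq ?iota_uniq.
  move=> d; rewrite mem_filter mem_iota add0n -dvdn_divisors //.
  case Hd: (d %| k)%N => //=; symmetry; apply: (leq_ltn_trans _ kN).
  exact: dvdn_leq.
rewrite (perm_big _ pe) /= big_filter big_mkcond /=.
rewrite (_ : iota 0 N = index_iota 0 N); last by rewrite /index_iota subn0.
rewrite big_ltn; last exact: leq_ltn_trans (leq0n k) kN.
rewrite big_ltn; last exact: leq_ltn_trans k0 kN.
rewrite dvd1n -Phi1 /PE.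
have -> : (0 %| k)%N = false by rewrite dvd0n; apply/negbTE; rewrite -lt0n.
rewrite mul1r; congr (_ * _); apply: eq_bigr => d _.
by case: (d %| k)%N; rewrite ?expr1 ?expr0.
Qed.
Definition qfact (m : nat) : {poly int} := \prod_(i < m) qint i.+1.

Lemma qfactS m : qfact m.+1 = qfact m * qint m.+1.
Proof. by rewrite /qfact big_ord_recr. Qed.

Lemma qfact0 : qfact 0 = 1.
Proof. by rewrite /qfact big_ord0. Qed.

Lemma qfact_prod N m : (m < N)%N -> qfact m = PE N (fun d => m %/ d)%N.
Proof.
elim: m => [|m IH] H.
  rewrite qfact0 /PE big1 // => d _; by rewrite div0n expr0.
rewrite qfactS IH ?(ltnW H) // (qint_prod (N:=N)) ?H // PE_mul.
apply: PE_eq => d /andP[d2 _].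
by rewrite (divnS _ (ltnW d2)) addnC.
Qed.

Lemma qbinom_big n k : (n < k)%N -> qbinom n k = 0.
Proof.
elim: n k => [|n IH] [|k] //= H.
by rewrite !IH ?mulr0 ?addr0 // ltnW.
Qed.

Lemma qbinom_fact n k : (k <= n)%N ->
  qbinom n k * (qfact k * qfact (n - k)) = qfact n.
Proof.
elim: n k => [|n IH] [|k] //= H.
- by rewrite subnn qfact0 !mul1r.
- by rewrite qfact0 subn0 !mul1r.
rewrite subSS mulrDl.
have T1 : qbinom n k * (qfact k.+1 * qfact (n - k)) = qfact n * qint k.+1.
  by rewrite qfactS -(IH k) // -[RHS]mulrA [X in _ * X = _]mulrAC.
have T2 : 'X^(k.+1) * qbinom n k.+1 * (qfact k.+1 * qfact (n - k)) =
          'X^(k.+1) * qint (n - k) * qfact n.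
  case: (ltngtP k n) => Hk.
  - rewrite -(subnSK Hk) [qfact (n - k.+1).+1]qfactS -(IH k.+1) //.
    rewrite -!mulrA; congr (_ * _).
    by rewrite [RHS]mulrC !mulrA.
  - by move: H; rewrite ltnS leqNgt Hk.
  - by rewrite Hk qbinom_big // subnn qint0 !(mulr0, mul0r).
rewrite T1 T2 qfactS [_ * qfact n]mulrC -mulrDr; congr (_ * _).
by rewrite -qintD addSn subnKC.
Qed.

Definition cc (n k d : nat) : bool := (d <= k %% d + (n - k) %% d)%N.

Lemma qbinom_prod n k : (k <= n)%N -> qbinom n k = PE n.+2 (cc n k).
Proof.
move=> kn.
have H := qbinom_fact kn.
rewrite !(qfact_prod (N:=n.+2)) ?ltnS ?(leq_trans (leq_subr _ _)) ?(leq_trans kn) // in H.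
rewrite PE_mul in H.
apply: (@mulIf _ (PE n.+2 (fun d => k %/ d + (n - k) %/ d)%N)); first exact: PE_neq0.
rewrite H PE_mul; apply: PE_eq => d /andP[d2 _].
by rewrite -{1}(subnKC kn) (divnD _ _ (ltnW d2)) addnC.
Qed.
From Stdlib Require Import Lia.

Lemma cc_div n k d : (2 <= d)%N -> (d %| n.+1)%N -> (k <= n)%N -> cc n k d = false.
Proof.
move=> d2 dv kn; apply/negbTE; rewrite /cc -ltnNge.
have d0 : (0 < d)%N by apply: ltnW.
set a := (k %% d)%N; set b := ((n - k) %% d)%N.
have ha : (a < d)%N by rewrite ltn_mod.
have hb : (b < d)%N by rewrite ltn_mod.
have H0 : ((a + b).+1 %% d = 0)%N.
  rewrite /a /b -addn1 -addnA modnDml addnCA modnDml addnA subnK // addn1.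
  exact/eqP.
rewrite ltnNge; apply/negP => Hc.
move: H0; rewrite -(subnKC Hc) -addnS modnDl modn_small.
  by [].
clearbody a b.
apply/ltP; move/ltP: ha; move/ltP: hb; move/leP: Hc; rewrite -?minusE -?plusE; lia.
Qed.

Lemma cc_ndiv n d : (2 <= d)%N -> (d <= n.+1)%N -> ~~ (d %| n.+1)%N -> cc n d.-1 d.
Proof.
move=> d2 dn ndv; rewrite /cc.
have d0 : (0 < d)%N by apply: ltnW.
have dd : (d.-1 < d)%N by rewrite prednK.
have dln : (d.-1 <= n)%N by rewrite -ltnS prednK.
rewrite (modn_small dd).
have : ((n - d.-1) %% d != 0)%N.
  apply: contra ndv => H.
  have -> : n.+1 = (n - d.-1 + d)%N.
    move/leP: dln; move/ltP: d0; rewrite -?minusE -?plusE; lia.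
  by rewrite dvdn_addl.
rewrite -lt0n => H.
by rewrite -{1}(prednK d0) -addn1 leq_add2l.
Qed.

Lemma dvdZq_trans a b c : dvdZq a b -> dvdZq b c -> dvdZq a c.
Proof. by move=> [r ->] [s ->]; exists (s * r); rewrite mulrA. Qed.

Lemma dvdZq_refl a : dvdZq a a.
Proof. by exists 1; rewrite mul1r. Qed.

Lemma dvdZq_mull a b c : dvdZq a b -> dvdZq a (c * b).
Proof. by move=> [r ->]; exists (c * r); rewrite mulrA. Qed.

Lemma Div1 N e1 e2 : (forall d, (2 <= d < N)%N -> e1 d <= e2 d)%N ->
  dvdZq (PE N e1) (PE N e2).
Proof.
move=> H; exists (PE N (fun d => e2 d - e1 d)%N); rewrite PE_mul; symmetry.
by apply: PE_eq => d Hd /=; rewrite subnK // H.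
Qed.

Lemma DivPhi N e d : (2 <= d < N)%N -> (1 <= e d)%N -> dvdZq 'Phi_d (PE N e).
Proof.
move=> Hd He; rewrite /PE (bigD1_seq d) /=; last first.
- exact: iota_uniq.
- by rewrite mem_index_iota.
rewrite mulrC; apply: dvdZq_mull; rewrite -(prednK He) exprS.
by exists ('Phi_d ^+ (e d).-1); rewrite mulrC.
Qed.

Local Notation pZtoC := (map_poly (intr : int -> algC)).

Lemma prim_same (x : algC) d e :
  d.-primitive_root x -> e.-primitive_root x -> d = e.
Proof.
move=> Hd He; apply/eqP; rewrite eqn_dvd.
by rewrite (prim_order_dvd Hd) (prim_order_dvd He) (prim_expr_order Hd) (prim_expr_order He) !eqxx.
Qed.

Lemma Cop d e : (0 < d)%N -> (0 < e)%N -> d != e ->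
  coprimep (pZtoC 'Phi_d) (pZtoC 'Phi_e).
Proof.
move=> d0 e0 de.
have [z pz] := C_prim_root_exists d0; have [w pw] := C_prim_root_exists e0.
rewrite (Cintr_Cyclotomic pz) (Cintr_Cyclotomic pw).
have -> : cyclotomic z d = \prod_(k < d | coprime k d) ('X - (z ^+ k)%:P) by [].
apply: (big_ind (fun p => coprimep p (cyclotomic w e))).
- exact: coprime1p.
- by move=> p q hp hq; rewrite coprimepMl hp hq.
move=> k ck; rewrite coprimep_sym coprimep_XsubC (root_cyclotomic pw).
apply/negP => He'.
have Hd' : d.-primitive_root (z ^+ k) by rewrite prim_root_exp_coprime.
by move: de; rewrite (prim_same Hd' He') eqxx.
Qed.

Lemma Div3 (s : seq nat) (m : {poly int}) : uniq s ->
  (forall d, d \in s -> 0 < d)%N -> (forall d, d \in s -> dvdZq 'Phi_d m) ->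
  pZtoC (\prod_(d <- s) 'Phi_d) %| pZtoC m.
Proof.
elim: s => [|d0 s IH] /=.
  by move=> _ _ _; rewrite big_nil rmorph1 dvd1p.
move=> /andP[ns us] Hpos Hdv.
rewrite big_cons rmorphM Gauss_dvdp.
  apply/andP; split.
    have [r ->] := Hdv d0 (mem_head _ _).
    by rewrite rmorphM dvdp_mull.
  apply: IH => // d Hd; [apply: Hpos | apply: Hdv]; by rewrite inE Hd orbT.
rewrite rmorph_prod big_seq.
apply: (big_ind (fun p => coprimep (pZtoC 'Phi_d0) p)).
- exact: coprimep1.
- by move=> p q hp hq; rewrite coprimepMr hp hq.
move=> d Hd; apply: Cop.
- by apply: Hpos; rewrite mem_head.
- by apply: Hpos; rewrite inE Hd orbT.
by apply: contraNneq ns => ->.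
Qed.

Lemma Transfer (P m : {poly int}) : P \is monic ->
  pZtoC P %| pZtoC m -> dvdZq P m.
Proof.
move=> mP H.
have E := Pdiv.IdomainMonic.divp_eq mP m.
have Hr : pZtoC P %| pZtoC (m %% P).
  move: H; rewrite {1}E rmorphD rmorphM /= dvdp_addr //.
  by rewrite dvdp_mull.
have inj : injective (intr : int -> algC) := intr_inj.
have Hs : forall p : {poly int}, size (pZtoC p) = size p.
  by move=> p; apply: size_map_inj_poly => //; rewrite rmorph0.
have r0 : m %% P = 0.
  apply/eqP; apply: contraT => nz.
  have nzC : pZtoC (m %% P) != 0 by rewrite -size_poly_eq0 Hs size_poly_eq0.
  have := dvdp_leq nzC Hr; rewrite !Hs leqNgt.
  by rewrite Pdiv.Idomain.ltn_modpN0 // monic_neq0.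
by exists (m %/ P); rewrite {1}E r0 addr0.
Qed.

Lemma Div2 N e (m : {poly int}) : (forall d, 2 <= d < N -> e d <= 1)%N ->
  (forall d, (2 <= d < N)%N -> e d = 1%N -> dvdZq 'Phi_d m) ->
  dvdZq (PE N e) m.
Proof.
move=> H1 H2.
have -> : PE N e = \prod_(d <- [seq d <- index_iota 2 N | e d == 1%N]) 'Phi_d.
  rewrite big_filter big_mkcond /PE big_nat_cond [RHS]big_nat_cond.
  apply: eq_bigr => d /andP[Hd _].
  have := H1 d Hd; case: (e d) => [|[|]] //= _; by rewrite ?expr0 ?expr1.
apply: Transfer; first by apply: monic_prod => d _; apply: Cyclotomic_monic.
apply: Div3.
- by rewrite filter_uniq // iota_uniq.
- move=> d; rewrite mem_filter mem_index_iota => /andP[_ /andP[Hd _]].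
  exact: ltnW.
move=> d; rewrite mem_filter mem_index_iota => /andP[/eqP He Hd].
exact: H2.
Qed.

Theorem theorem2 (n : nat) (hn : (0 < n)%N) :
  (exists L, is_lcmZq [seq qint k | k <- iota 1 n.+1] L) /\
  (forall L, is_lcmZq [seq qint k | k <- iota 1 n.+1] L ->
     exists Q, L = Q * qint n.+1 /\
               is_lcmZq [seq qbinom n k | k <- iota 0 n.+1] Q).
Proof.
set N := n.+2.
set P := PE N (fun _ => 1%N).
set Q0 := PE N (fun d => nat_of_bool (~~ (d %| n.+1)%N)).
have HPQ : P = Q0 * qint n.+1.
  rewrite (qint_prod (N:=N)); last by rewrite /= ltnSn.
  by rewrite PE_mul; apply: PE_eq => d _ /=; case: (d %| n.+1)%N.
have LP : is_lcmZq [seq qint k | k <- iota 1 n.+1] P.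
  split.
  - move=> p /mapP [k Hk ->]; move: Hk; rewrite mem_iota add1n => Hk.
    rewrite (qint_prod (N:=N)) //.
    by apply: Div1 => d _; exact: leq_b1.
  - move=> m Hm; apply: Div2 => // d Hd _.
    have /andP[d2 dN] := Hd.
    apply: (dvdZq_trans _ (Hm (qint d) _)).
      rewrite (qint_prod (N:=N)); last by rewrite dN andbT ltnW.
      by apply: DivPhi => //; rewrite dvdnn.
    by apply/mapP; exists d => //; rewrite mem_iota add1n dN ltnW.
have LQ : is_lcmZq [seq qbinom n k | k <- iota 0 n.+1] Q0.
  split.
  - move=> p /mapP [k Hk ->]; move: Hk; rewrite mem_iota add0n /= ltnS => Hk.
    rewrite qbinom_prod //; apply: Div1 => d /andP[d2 _].
    case Hdv: (d %| n.+1)%N => /=; last exact: leq_b1.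
    by rewrite cc_div.
  - move=> m Hm; apply: Div2.
    + by move=> d _; exact: leq_b1.
    + move=> d /andP[d2 dN] He.
      have ndv : ~~ (d %| n.+1)%N by move: He; case: (d %| n.+1)%N.
      have dln : (d.-1 <= n)%N by rewrite -ltnS prednK // ltnW.
      apply: (dvdZq_trans _ (Hm (qbinom n d.-1) _)).
        rewrite qbinom_prod //; apply: DivPhi; first by rewrite d2 dN.
        by rewrite cc_ndiv.
      by apply/mapP; exists d.-1 => //; rewrite mem_iota add0n /= ltnS.
split; first by exists P.
move=> L [L1 L2].
have [a Ha] : dvdZq P L := LP.2 L L1.
have [b Hb] : dvdZq L P := L2 P LP.1.
exists (a * Q0); split; first by rewrite Ha HPQ mulrA.
split.
- by move=> p Hp; apply: dvdZq_mull; exact: LQ.1 p Hp.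
- move=> m Hm; have [t Ht] := LQ.2 m Hm.
  have ab : b * a = 1.
    apply: (@mulIf _ P); first exact: PE_neq0.
    by rewrite mul1r -mulrA -Ha -Hb.
  by exists (t * b); rewrite Ht -mulrA (mulrA b) ab mul1r.
Qed.
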